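(* Let $m$ be a positive integer and let $p,q$ be distinct integers. If $4p\not\equiv0$, $4q\not\equiv0$, $2(p+q)\not\equiv0$ and $2(p-q)\not\equiv0\pmod m$, then the numbers $\zeta_m^p,\zeta_m^{-p},\zeta_m^q,\zeta_m^{-q}$ are $\mathbb{Q}$-linearly independent, where $\zeta_m=e^{\frac{2\pi}{m}i}$. *)

(* Defs.v *)
From HB Require Import structures.
From mathcomp Require Import all_boot all_order all_algebra.
From mathcomp Require Import reals trigo.
From mathcomp Require Import complex.
Set Implicit Arguments. Unset Strict Implicit. Unset Printing Implicit Defensive.
Import Order.TTheory GRing.Theory Num.Theory.
Local Open Scope ring_scope.

Definition zeta (R : realType) (m : nat) : R[i] :=
  (cos (2 * pi / m%:R) +i* sin (2 * pi / m%:R))%C.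

Definition Qlin_indep4 (R : realType) (z1 z2 z3 z4 : R[i]) : Prop :=
  forall a b c d : rat,
    ratr a * z1 + ratr b * z2 + ratr c * z3 + ratr d * z4 = 0 ->
    [/\ a = 0, b = 0, c = 0 & d = 0].

(* Main.v *)
Require Import Defs.
From HB Require Import structures.
From mathcomp Require Import all_boot all_order all_algebra.
From mathcomp Require Import reals trigo.
From mathcomp Require Import complex.
From mathcomp Require Import all_field.
From mathcomp Require Import zify ring lra.
Import Order.TTheory GRing.Theory Num.Theory.
Local Open Scope ring_scope.

Lemma exprz_mod (F : fieldType) (u : F) (N : nat) (e : int) :
  (0 < N)%N -> u ^+ N = 1 -> u ^ e = u ^+ `|(e %% N%:Z)%Z|%N.
Proof.
move=> N0 uN.
have u0 : u != 0.
  apply/eqP=> u0; move: uN; rewrite u0 expr0n; case: N N0 => // n _ /eqP.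
  by rewrite eq_sym oner_eq0.
have hN : (N%:Z != 0) by rewrite eqz_nat -lt0n.
rewrite {1}(divz_eq e N) expfzDr // -exprz_exp exprzAC.
have -> : u ^ (N%:Z) = 1 by rewrite -exprnP uN.
rewrite exp1rz mul1r exprnP gez0_abs //; exact: modz_ge0.
Qed.

Lemma prim_exprz_eq1 (F : fieldType) (N : nat) (w : F) (e : int) :
  N.-primitive_root w -> (w ^ e == 1) = (N%:Z %| e)%Z.
Proof.
move=> pw; have N0 := prim_order_gt0 pw.
rewrite (@exprz_mod _ _ _ e N0 (prim_expr_order pw)) -(prim_order_dvd pw).
have hN : (N%:Z != 0) by rewrite eqz_nat -lt0n.
have h1 := modz_ge0 e hN.
have h2 : ((e %% N%:Z)%Z < N%:Z) by apply: ltz_pmod; rewrite ltz_nat.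
have h3 := divz_eq e N.
by rewrite {2}(divz_eq e N) rpredDl ?dvdz_mull ?dvdzz // dvdzE absz_nat.
Qed.

Definition Rf {F : fieldType} (a b c d : rat) (p q : int) (u : F) : F :=
  ratr a * u ^ p + ratr b * u ^ (- p) + ratr c * u ^ q + ratr d * u ^ (- q).

Lemma Rf_gal (m : nat) (w : algC) a b c d p q (k : nat) :
  m.-primitive_root w -> coprime k m -> Rf a b c d p q w = 0 ->
  Rf a b c d p q (w ^+ k) = 0.
Proof.
move=> pw ck H.
have [u Hu] := Qn_aut_exists ck.
have rM : forall (x : rat) y, u (ratr x * y) = ratr x * u y.
  by move=> x y; rewrite rmorphM fmorph_rat.
have := congr1 u H; rewrite rmorph0 /Rf !rmorphD !rM !fmorphXz.
by rewrite Hu // (prim_expr_order pw).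
Qed.

Lemma geom_sum (F : fieldType) (eta : F) (N : nat) :
  eta ^+ N = 1 -> \sum_(j < N) eta ^+ j = if eta == 1 then N%:R else 0.
Proof.
move=> eN; case: eqP => [->|/eqP ne1].
  by rewrite (eq_bigr (fun _ => 1)) ?sumr_const ?card_ord // => j _; rewrite expr1n.
have := subrX1 eta N; rewrite eN subrr => /esym /eqP.
by rewrite mulf_eq0 subr_eq0 (negbTE ne1) /= => /eqP.
Qed.

Definition Cl {F : fieldType} (N : nat) (a b c d : rat) (p q : int) (w : F) (t : int) : F :=
  (if (N%:Z %| p - t)%Z then ratr a * w ^ p else 0) +
  (if (N%:Z %| - p - t)%Z then ratr b * w ^ (- p) else 0) +
  (if (N%:Z %| q - t)%Z then ratr c * w ^ q else 0) +
  (if (N%:Z %| - q - t)%Z then ratr d * w ^ (- q) else 0).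

Lemma avg_term (F : fieldType) (N : nat) (om w : F) (x : rat) (s t : int) :
  N.-primitive_root om -> w != 0 ->
  \sum_(j < N) om ^ (- (j%:Z * t)) * (ratr x * (w * om ^+ j) ^ s) =
  N%:R * (if (N%:Z %| s - t)%Z then ratr x * w ^ s else 0).
Proof.
move=> po w0.
have N0 := prim_order_gt0 po.
have om0 : om != 0.
  apply/eqP=> o0; have := prim_expr_order po; rewrite o0 expr0n.
  by case: N N0 {po} => // n _ /eqP; rewrite eq_sym oner_eq0.
rewrite (eq_bigr (fun j : 'I_N => ratr x * w ^ s * (om ^ (s - t)) ^+ j)); last first.
  move=> j _; rewrite exprzMl ?unitfE ?expf_neq0 //.
  rewrite !exprnP !exprz_exp.
  have E : om ^ (- (j%:Z * t)) * om ^ (j%:Z * s) = om ^ ((s - t) * j%:Z).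
    by rewrite -expfzDr //; congr (_ ^ _); ring.
  by rewrite -E; ring.
rewrite -mulr_sumr geom_sum; last first.
  by rewrite exprnP exprz_exp mulrC -exprz_exp -exprnP (prim_expr_order po) exp1rz.
rewrite (@prim_exprz_eq1 _ _ _ (s - t) po); case: ifP => _; last by rewrite !mulr0.
by rewrite mulrC.
Qed.

Lemma avg (F : fieldType) (N : nat) (om w : F) a b c d p q t :
  N.-primitive_root om -> w != 0 ->
  \sum_(j < N) om ^ (- (j%:Z * t)) * Rf a b c d p q (w * om ^+ j) =
  N%:R * Cl N a b c d p q w t.
Proof.
move=> po w0; rewrite /Rf /Cl.
under eq_bigr do rewrite !mulrDr.
by rewrite !big_split /= !avg_term // !mulrDr.
Qed.

Lemma om_neq0 (F : fieldType) (N : nat) (om : F) : N.-primitive_root om -> om != 0.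
Proof.
move=> po; have N0 := prim_order_gt0 po.
apply/eqP=> o0; have := prim_expr_order po; rewrite o0 expr0n.
by case: N N0 {po} => // n _ /eqP; rewrite eq_sym oner_eq0.
Qed.

Lemma split_all (N : nat) (om w : algC) a b c d p q (j0 : nat) :
  N.-primitive_root om -> w != 0 ->
  (forall j : nat, (j < N)%N -> j != j0 -> Rf a b c d p q (w * om ^+ j) = 0) ->
  Rf a b c d p q (w * om ^+ j0) = 0 -> forall t, Cl N a b c d p q w t = 0.
Proof.
move=> po w0 H1 H2 t.
have N0 := prim_order_gt0 po.
have := @avg _ N om w a b c d p q t po w0.
rewrite big1; last first.
  move=> j _; case: (eqVneq (j : nat) j0) => [->|hj]; first by rewrite H2 mulr0.
  by rewrite H1 ?mulr0.
move/esym/eqP; by rewrite mulf_eq0 pnatr_eq0 eqn0Ngt N0 /= => /eqP.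
Qed.

Lemma split_one (N : nat) (om w : algC) a b c d p q (j0 : nat) t0 :
  N.-primitive_root om -> w != 0 -> (j0 < N)%N ->
  (forall j : nat, (j < N)%N -> j != j0 -> Rf a b c d p q (w * om ^+ j) = 0) ->
  Cl N a b c d p q w t0 = 0 -> Rf a b c d p q (w * om ^+ j0) = 0.
Proof.
move=> po w0 j0N H1 H2.
have := @avg _ N om w a b c d p q t0 po w0.
rewrite H2 mulr0 (bigD1 (Ordinal j0N)) //= big1; last first.
  move=> j hj; rewrite H1 ?mulr0 //.
rewrite addr0 => /eqP; rewrite mulf_eq0 => /orP[|/eqP //].
by rewrite expfz_eq0 (negbTE (om_neq0 _ _ _ po)) andbF.
Qed.

Lemma L2 (m : nat) (w : algC) (x y : rat) (s s' : int) :
  m.-primitive_root w -> ~~ (m%:Z %| 2 * (s - s'))%Z ->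
  ratr x * w ^ s + ratr y * w ^ s' = 0 -> x = 0.
Proof.
move=> pw nd H; apply/eqP/negPn/negP => x0.
have m0 := prim_order_gt0 pw.
have w0 := om_neq0 _ _ _ pw.
pose rho := - y / x.
have E : w ^ (s - s') = ratr rho.
  have ws0 : w ^ s' != 0 by rewrite expfz_neq0.
  have rx0 : ratr x != 0 :> algC by rewrite fmorph_eq0.
  have H' : w ^ s = ratr rho * w ^ s'.
    have -> : w ^ s = (ratr x)^-1 * (ratr x * w ^ s) by rewrite mulKf.
    have -> : ratr x * w ^ s = - (ratr y * w ^ s') by apply/eqP; rewrite -addr_eq0 H.
    by rewrite /rho fmorph_div rmorphN; ring.
  by rewrite expfzDr // H' -mulrA -expfzDr // subrr expr0z mulr1.
have rm : rho ^+ m = 1.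
  have : (ratr (rho ^+ m) : algC) = 1.
    rewrite rmorphXn /= -E exprnP exprz_exp mulrC -exprz_exp -exprnP.
    by rewrite (prim_expr_order pw) exp1rz.
  by move/eqP; rewrite fmorph_eq1 => /eqP.
have r1 : `|rho| = 1.
  apply/eqP; rewrite -(@pexpr_eq1 _ _ m) ?normr_ge0 -?lt0n // -normrX rm normr1 //.
have r2 : rho ^+ 2 = 1 by rewrite -real_normK ?num_real // r1 expr1n.
move/negP: nd; apply.
have : ratr (rho ^+ 2) = 1 :> algC by rewrite r2 rmorph1.
rewrite rmorphXn /= => r3.
by rewrite -(@prim_exprz_eq1 _ _ _ (2 * (s - s')) pw) mulrC -exprz_exp E -exprnP r3.
Qed.

Arguments L2 {m w x y s s'}.
Arguments om_neq0 {F N om}.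
Arguments prim_exprz_eq1 {F N w} e.
Lemma dvdzN' (N : nat) (x : int) : (N%:Z %| - x)%Z = (N%:Z %| x)%Z.
Proof. by rewrite !dvdzE abszN. Qed.

Lemma fin_a (m N : nat) (w : algC) a b c d p q :
  m.-primitive_root w ->
  ~~ (m%:Z %| 4 * p)%Z -> ~~ (m%:Z %| 2 * (p + q))%Z -> ~~ (m%:Z %| 2 * (p - q))%Z ->
  ~~ ((N%:Z %| 2 * p)%Z && (N%:Z %| p - q)%Z) ->
  ~~ ((N%:Z %| 2 * p)%Z && (N%:Z %| p + q)%Z) ->
  ~~ ((N%:Z %| p - q)%Z && (N%:Z %| p + q)%Z) ->
  Cl N a b c d p q w p = 0 -> a = 0.
Proof.
move=> pw h4p hpq hmq n1 n2 n3.
rewrite /Cl subrr dvdz0.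
have e1 : -p - p = - (2 * p) by ring.
have e2 : q - p = - (p - q) by ring.
have e3 : -q - p = - (p + q) by ring.
rewrite e1 e2 e3 !dvdzN'.
case h1 : (N%:Z %| 2 * p)%Z; case h2 : (N%:Z %| p - q)%Z; case h3 : (N%:Z %| p + q)%Z;
  rewrite ?h1 ?h2 ?h3 in n1 n2 n3 |- *; try done; rewrite ?addr0 ?add0r => H.
- apply: (L2 pw _ H); by rewrite (_ : 2 * (p - - p) = 4 * p) //; ring.
- exact: (L2 pw hmq H).
- apply: (L2 pw _ H); by rewrite (_ : 2 * (p - - q) = 2 * (p + q)) //; ring.
- move/eqP: H; rewrite mulf_eq0 expfz_eq0 (negbTE (om_neq0 pw)) andbF orbF.
  by rewrite fmorph_eq0 => /eqP.
Qed.

Lemma perm4a (x y z u : algC) : x + y + z + u = y + x + z + u.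
Proof. by ring. Qed.
Lemma perm4b (x y z u : algC) : x + y + z + u = z + u + x + y.
Proof. by ring. Qed.
Lemma perm4c (x y z u : algC) : x + y + z + u = z + u + y + x.
Proof. by ring. Qed.

Lemma fin_all (m N : nat) (w : algC) a b c d p q :
  m.-primitive_root w ->
  ~~ (m%:Z %| 4 * p)%Z -> ~~ (m%:Z %| 4 * q)%Z ->
  ~~ (m%:Z %| 2 * (p + q))%Z -> ~~ (m%:Z %| 2 * (p - q))%Z ->
  ~~ ((N%:Z %| 2 * p)%Z && (N%:Z %| p - q)%Z) ->
  ~~ ((N%:Z %| 2 * p)%Z && (N%:Z %| p + q)%Z) ->
  ~~ ((N%:Z %| 2 * q)%Z && (N%:Z %| p - q)%Z) ->
  ~~ ((N%:Z %| 2 * q)%Z && (N%:Z %| p + q)%Z) ->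
  (forall t, Cl N a b c d p q w t = 0) -> [/\ a = 0, b = 0, c = 0 & d = 0].
Proof.
move=> pw h4p h4q hpq hmq n1 n2 n3 n4 H.
have n5 : ~~ ((N%:Z %| p - q)%Z && (N%:Z %| p + q)%Z).
  apply/negP => /andP[u v]; move/negP: n1; apply; rewrite u andbT.
  have -> : 2 * p = (p - q) + (p + q) by ring.
  exact: rpredD.
have dN : forall x : int, (N%:Z %| - x)%Z = (N%:Z %| x)%Z := dvdzN' N.
have mN : forall x : int, (m%:Z %| - x)%Z = (m%:Z %| x)%Z := dvdzN' m.
have E1 : - p + q = - (p - q) by ring.
have E2 : - p - q = - (p + q) by ring.
have E3 : q - p = - (p - q) by ring.
have E4 : - q + p = p - q by ring.
have E5 : - q - p = - (p + q) by ring.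
have E6 : q + p = p + q by ring.
split.
- exact: (@fin_a m N w a b c d p q pw h4p hpq hmq n1 n2 n5 (H p)).
- apply: (@fin_a m N w b a c d (- p) q pw).
  + by rewrite mulrN mN.
  + by rewrite E1 mulrN mN.
  + by rewrite E2 mulrN mN.
  + by rewrite mulrN dN E2 dN.
  + by rewrite mulrN dN E1 dN.
  + by rewrite E1 E2 !dN andbC.
  + by rewrite -(H (- p)) /Cl opprK perm4a.
- apply: (@fin_a m N w c d a b q p pw h4q).
  + by rewrite E6.
  + by rewrite E3 mulrN mN.
  + by rewrite E3 dN.
  + by rewrite E6.
  + by rewrite E6 E3 dN.
  + by rewrite -(H q) /Cl perm4b.
- apply: (@fin_a m N w d c a b (- q) p pw).
  + by rewrite mulrN mN.
  + by rewrite E4.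
  + by rewrite E5 mulrN mN.
  + by rewrite mulrN dN E5 dN.
  + by rewrite mulrN dN E4.
  + by rewrite E4 E5 dN andbC.
  + by rewrite -(H (- q)) /Cl opprK perm4c.
Qed.

Lemma bad_prime (m d j : nat) : (0 < m)%N -> ~~ coprime (1 + j * d) m ->
  exists l, [/\ prime l, (l %| m)%N, ~~ (l %| d)%N & (l %| 1 + j * d)%N].
Proof.
move=> m0 nc.
set g := gcdn (1 + j * d) m.
have g0 : (0 < g)%N by rewrite gcdn_gt0 m0 orbT.
have g1 : (1 < g)%N by move: nc; rewrite /coprime -/g; case: g g0 => [|[|]].
exists (pdiv g); have pp := pdiv_prime g1.
have h1 : (pdiv g %| 1 + j * d)%N := dvdn_trans (pdiv_dvd g) (dvdn_gcdl _ _).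
have h2 : (pdiv g %| m)%N := dvdn_trans (pdiv_dvd g) (dvdn_gcdr _ _).
split=> //; apply/negP => hd.
have : (pdiv g %| 1)%N by rewrite (dvdn_addl 1 (dvdn_mull j hd)) in h1.
by rewrite dvdn1 => /eqP e; move: pp; rewrite e.
Qed.

Arguments bad_prime {m d j}.

Lemma coprime_shift (m d j : nat) : (0 < m)%N ->
  (forall l, prime l -> (l %| m)%N -> (l %| d)%N) -> coprime (1 + j * d) m.
Proof.
move=> m0 H; apply/negPn/negP => nc.
have [l [pl lm ld _]] := bad_prime m0 nc.
by move/negP: ld; apply; apply: H.
Qed.

Arguments coprime_shift {m d} j.

Lemma bad_P (m P d j : nat) : (0 < m)%N -> prime P -> m = (P * d)%N ->
  ~~ coprime (1 + j * d) m -> (P %| 1 + j * d)%N /\ ~~ (P %| d)%N.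
Proof.
move=> m0 pP md nc.
have [l [pl lm ld l1]] := bad_prime m0 nc.
move: lm; rewrite md Euclid_dvdM // (negbTE ld) orbF dvdn_prime2 // => /eqP el.
by rewrite -el.
Qed.

Arguments bad_P {m P d j}.

Lemma bad_unique (m P d j1 j2 : nat) : (0 < m)%N -> prime P -> m = (P * d)%N ->
  ~~ coprime (1 + j1 * d) m -> ~~ coprime (1 + j2 * d) m ->
  (j1 < P)%N -> (j2 < P)%N -> j1 = j2.
Proof.
move=> m0 pP md n1 n2.
have [a1 nd] := bad_P m0 pP md n1.
have [a2 _] := bad_P m0 pP md n2.
wlog le12 : j1 j2 a1 a2 n1 n2 / (j1 <= j2)%N.
  move=> W l1 l2; case: (leqP j1 j2) => h; first exact: W.
  by apply/esym; apply: W => //; apply: ltnW.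
move=> _ l2.
have : (P %| (j2 - j1) * d)%N.
  by rewrite mulnBl -(subnDl 1) (dvdn_sub a2 a1).
rewrite Euclid_dvdM // (negbTE nd) orbF => h.
apply/eqP; rewrite eqn_leq le12 /= -subn_eq0.
apply/negPn/negP => nz.
have := dvdn_leq _ h; rewrite lt0n nz => /(_ isT) hh.
have : (j2 - j1 < P)%N by apply: leq_ltn_trans (leq_subr _ _) l2.
by rewrite ltnNge hh.
Qed.

Lemma prim_sub (m N d : nat) (w : algC) : m.-primitive_root w -> m = (N * d)%N ->
  N.-primitive_root (w ^+ d).
Proof.
move=> pw md.
have m0 := prim_order_gt0 pw.
have := exp_prim_root pw d.
have dm : (d %| m)%N by rewrite md dvdn_mull.
have d0 : (0 < d)%N by move: m0; rewrite md muln_gt0 => /andP[].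
by rewrite (gcdn_idPl dm) md mulnK.
Qed.

Lemma wshift (w : algC) (d j : nat) : w * (w ^+ d) ^+ j = w ^+ (1 + j * d).
Proof. by rewrite -exprM exprD expr1 mulnC. Qed.

Lemma dvdz_pmul (P k : nat) (x : int) : prime P -> ~~ (P %| k)%N ->
  (P%:Z %| k%:Z * x)%Z = (P%:Z %| x)%Z.
Proof. by move=> pP nk; rewrite !dvdzE abszM !absz_nat Euclid_dvdM // (negbTE nk). Qed.

Lemma perm4d (x y z u : algC) : x + y + z + u = z + u + x + y.
Proof. by ring. Qed.

Lemma Cl_swap (N : nat) a b c d p q (w : algC) t :
  Cl N a b c d p q w t = Cl N c d a b q p w t.
Proof. by rewrite /Cl perm4d. Qed.

Lemma empty_class1 (P : nat) a b c d p q (w : algC) : prime P -> (4 < P)%N ->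
  (P%:Z %| p)%Z -> ~~ (P%:Z %| q)%Z -> Cl P a b c d p q w (2 * q) = 0.
Proof.
move=> pP P4 hp hq.
have n2 : ~~ (P %| 2)%N by apply/negP => /(dvdn_leq (ltn0Sn _)) h; lia.
have n3 : ~~ (P %| 3)%N by apply/negP => /(dvdn_leq (ltn0Sn _)) h; lia.
have f1 : (P%:Z %| p - 2 * q)%Z = false.
  apply/negP => h; move/negP: hq; apply.
  rewrite -(@dvdz_pmul P 2 q pP n2) (_ : 2%:Z * q = p - (p - 2 * q)); last by ring.
  by apply: rpredB.
have f2 : (P%:Z %| - p - 2 * q)%Z = false.
  apply/negP => h; move/negP: hq; apply.
  rewrite -(@dvdz_pmul P 2 q pP n2) (_ : 2%:Z * q = - (- p - 2 * q) - p); last by ring.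
  by rewrite rpredB // rpredN.
have f3 : (P%:Z %| q - 2 * q)%Z = false.
  by rewrite (_ : q - 2 * q = - q) ?dvdzN' ?(negbTE hq) //; ring.
have f4 : (P%:Z %| - q - 2 * q)%Z = false.
  by rewrite (_ : - q - 2 * q = - (3%:Z * q)) ?dvdzN' ?dvdz_pmul ?(negbTE hq) //; ring.
by rewrite /Cl f1 f2 f3 f4 !addr0.
Qed.

Lemma empty_class (P : nat) a b c d p q (w : algC) : prime P -> (4 < P)%N ->
  ~~ ((P%:Z %| p)%Z && (P%:Z %| q)%Z) -> exists t0, Cl P a b c d p q w t0 = 0.
Proof.
move=> pP P4 npq.
case hp: (P%:Z %| p)%Z; case hq: (P%:Z %| q)%Z; rewrite ?hp ?hq // in npq.
- by exists (2 * q); apply: empty_class1 => //; rewrite hq.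
- by exists (2 * p); rewrite Cl_swap; apply: empty_class1 => //; rewrite hp.
- exists 0; rewrite /Cl !subr0 !dvdzN' hp hq !addr0 //.
Qed.

Lemma div12 (m : nat) : (0 < m)%N ->
  (forall P, prime P -> (P %| m)%N -> odd P -> ~~ (4 < P)%N && ~~ (P * P %| m)%N) ->
  ~~ (8 %| m)%N -> (m %| 12)%N.
Proof.
move=> m0 hodd h8.
set g := gcdn m 12.
have gm : (g %| m)%N := dvdn_gcdl _ _.
have g12 : (g %| 12)%N := dvdn_gcdr _ _.
set k := (m %/ g)%N.
have mk : m = (k * g)%N by rewrite /k divnK.
have k0 : (0 < k)%N by move: m0; rewrite mk muln_gt0 => /andP[].
case: (ltnP 1 k) => [k1|]; last first.
  move=> k1; have k1' : k = 1%N by lia.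
  by rewrite mk k1' mul1n.
have pl := pdiv_prime k1.
set l := pdiv k in pl.
have lk : (l %| k)%N := pdiv_dvd k.
have lm : (l %| m)%N by rewrite mk dvdn_mulr.
have [l2|ol] := even_prime pl.
- have k2 : (2 %| k)%N by rewrite -l2.
  case h4 : (4 %| m)%N.
  + have g4 : (4 %| g)%N by rewrite dvdn_gcd h4.
    by case/negP: h8; rewrite mk (_ : 8 = 2 * 4)%N // dvdn_mul.
  + have l2m : (2 %| m)%N by rewrite -l2.
    have g2 : (2 %| g)%N by rewrite dvdn_gcd l2m.
    have : (4 %| m)%N by rewrite mk (_ : 4 = 2 * 2)%N // dvdn_mul.
    by rewrite h4.
- have /andP[l4 ll] := hodd l pl lm ol.
  have l3 : l = 3%N.
    by move: pl ol l4; rewrite -leqNgt; case: (l) => [|[|[|[|[|]]]]].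
  have l3m : (3 %| m)%N by rewrite -l3.
  have g3 : (3 %| g)%N by rewrite dvdn_gcd l3m.
  by case/negP: ll; rewrite mk dvdn_mul // l3.
Qed.

Lemma NT_odd (P : nat) (p q : int) : prime P -> odd P ->
  ~~ ((P%:Z %| p)%Z && (P%:Z %| q)%Z) ->
  [/\ ~~ ((P%:Z %| 2 * p)%Z && (P%:Z %| p - q)%Z),
      ~~ ((P%:Z %| 2 * p)%Z && (P%:Z %| p + q)%Z),
      ~~ ((P%:Z %| 2 * q)%Z && (P%:Z %| p - q)%Z) &
      ~~ ((P%:Z %| 2 * q)%Z && (P%:Z %| p + q)%Z)].
Proof.
move=> pP oP npq.
have n2 : ~~ (P %| 2)%N.
  by rewrite dvdn_prime2 //; apply: contraTN oP => /eqP ->.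
rewrite (@dvdz_pmul P 2 p pP n2) (@dvdz_pmul P 2 q pP n2).
split; apply/negP => /andP[h1 h2]; move/negP: npq; apply; rewrite ?h1 /= ?andbT.
- have -> : q = p - (p - q) by ring.
  by rewrite rpredB.
- have -> : q = (p + q) - p by ring.
  by rewrite rpredB.
- have -> : p = (p - q) + q by ring.
  by rewrite rpredD.
- have -> : p = (p + q) - q by ring.
  by rewrite rpredB.
Qed.

Arguments split_all {N om w a b c d p q j0}.
Arguments split_one {N om w a b c d p q j0 t0}.
Arguments fin_all {m N w a b c d p q}.
Arguments empty_class {P a b c d p q w}.
Arguments bad_unique {m P d j1 j2}.
Arguments prim_sub {m N d w}.
Arguments Rf_gal {m w a b c d p q k}.

Lemma k4 (k : nat) : (k * 4 = 2 * (2 * k))%N. Proof. lia. Qed.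
Lemma k8 (k : nat) : (k * 8 = 4 * (2 * k))%N. Proof. lia. Qed.

Lemma NT2 (p q : int) : (2%:Z %| p)%Z != (2%:Z %| q)%Z ->
  [/\ ~~ ((2%:Z %| 2 * p)%Z && (2%:Z %| p - q)%Z),
      ~~ ((2%:Z %| 2 * p)%Z && (2%:Z %| p + q)%Z),
      ~~ ((2%:Z %| 2 * q)%Z && (2%:Z %| p - q)%Z) &
      ~~ ((2%:Z %| 2 * q)%Z && (2%:Z %| p + q)%Z)].
Proof.
case hp : (2%:Z %| p)%Z; case hq : (2%:Z %| q)%Z => // _; split; lia.
Qed.

Lemma NT4 (p q : int) : ~~ (2%:Z %| p)%Z -> ~~ (2%:Z %| q)%Z ->
  [/\ ~~ ((4%:Z %| 2 * p)%Z && (4%:Z %| p - q)%Z),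
      ~~ ((4%:Z %| 2 * p)%Z && (4%:Z %| p + q)%Z),
      ~~ ((4%:Z %| 2 * q)%Z && (4%:Z %| p - q)%Z) &
      ~~ ((4%:Z %| 2 * q)%Z && (4%:Z %| p + q)%Z)].
Proof. by move=> hp hq; split; lia. Qed.

Lemma small_m (m : nat) (p q : int) : (0 < m)%N -> (m %| 12)%N ->
  ((4 %| m)%N -> (2%:Z %| p)%Z = (2%:Z %| q)%Z) ->
  ((2 %| m)%N -> ~~ ((2%:Z %| p)%Z && (2%:Z %| q)%Z)) ->
  ~~ (m%:Z %| 4 * p)%Z -> ~~ (m%:Z %| 4 * q)%Z ->
  ~~ (m%:Z %| 2 * (p + q))%Z -> ~~ (m%:Z %| 2 * (p - q))%Z -> False.
Proof.
move=> m0 h12; have hle := dvdn_leq (isT : (0 < 12)%N) h12; move: hle h12.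
case: m m0 => [|[|[|[|[|[|[|[|[|[|[|[|[|m]]]]]]]]]]]]] //= _ _ _; move=> *; lia.
Qed.

Lemma primes_div (m N e : nat) : m = (N * e)%N ->
  (forall l, prime l -> (l %| N)%N -> (l %| e)%N) ->
  forall l, prime l -> (l %| m)%N -> (l %| e)%N.
Proof.
move=> md H l pl; rewrite md Euclid_dvdM // => /orP[|//].
exact: H.
Qed.

Arguments NT_odd {P p q}.
Arguments div12 {m}.
Arguments small_m {m p q}.
Arguments NT2 {p q}.
Arguments NT4 {p q}.
Arguments primes_div {m N e}.

Lemma core (m : nat) : forall (w : algC) (a b c d : rat) (p q : int),
  m.-primitive_root w ->
  ~~ (m%:Z %| 4 * p)%Z -> ~~ (m%:Z %| 4 * q)%Z ->
  ~~ (m%:Z %| 2 * (p + q))%Z -> ~~ (m%:Z %| 2 * (p - q))%Z ->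
  Rf a b c d p q w = 0 -> [/\ a = 0, b = 0, c = 0 & d = 0].
Proof.
elim/ltn_ind: m => m IH w a b c d p q pw h1 h2 h3 h4 H.
have m0 := prim_order_gt0 pw.
have w0 : w != 0 := om_neq0 pw.
have G : forall k, coprime k m -> Rf a b c d p q (w ^+ k) = 0.
  by move=> k ck; apply: Rf_gal pw ck H.
case: (ltnP 1 (gcdn m (gcdn `|p| `|q|))) => [g1 | g1].
  set g := gcdn _ _ in g1.
  have pP := pdiv_prime g1.
  set P := pdiv g in pP.
  have Pg : (P %| g)%N := pdiv_dvd g.
  have Pm : (P %| m)%N := dvdn_trans Pg (dvdn_gcdl _ _).
  have Pp : (P%:Z %| p)%Z.
    rewrite dvdzE absz_nat; apply: dvdn_trans Pg _.
    exact: dvdn_trans (dvdn_gcdr _ _) (dvdn_gcdl _ _).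
  have Pq : (P%:Z %| q)%Z.
    rewrite dvdzE absz_nat; apply: dvdn_trans Pg _.
    exact: dvdn_trans (dvdn_gcdr _ _) (dvdn_gcdr _ _).
  have [m1 em] := dvdnP Pm.
  have [p1 ep] := dvdzP Pp.
  have [q1 eq] := dvdzP Pq.
  have P1 : (1 < P)%N := prime_gt1 pP.
  have m10 : (0 < m1)%N by move: m0; rewrite em muln_gt0 => /andP[].
  have lt : (m1 < m)%N by rewrite em ltn_Pmulr.
  have pw1 : m1.-primitive_root (w ^+ P) := @prim_sub m m1 P w pw em.
  have nd : forall x : int, ~~ (m%:Z %| x * P%:Z)%Z -> ~~ (m1%:Z %| x)%Z.
    by move=> x; apply: contra => hx; rewrite em PoszM; apply: dvdz_mul.
  apply: (IH m1 lt (w ^+ P) a b c d p1 q1 pw1).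
  - apply: nd; rewrite (_ : 4 * p1 * P%:Z = 4 * p) //. rewrite ep. ring.
  - apply: nd; rewrite (_ : 4 * q1 * P%:Z = 4 * q) //. rewrite eq. ring.
  - apply: nd; rewrite (_ : 2 * (p1 + q1) * P%:Z = 2 * (p + q)) //. rewrite ep eq. ring.
  - apply: nd; rewrite (_ : 2 * (p1 - q1) * P%:Z = 2 * (p - q)) //. rewrite ep eq. ring.
  - have ex : forall e : int, (w ^+ P) ^ e = w ^ (e * P%:Z).
      by move=> e; rewrite exprnP exprz_exp mulrC.
    by rewrite -H /Rf !ex ep eq !mulNr.
have npq : forall P, prime P -> (P %| m)%N -> ~~ ((P%:Z %| p)%Z && (P%:Z %| q)%Z).
  move=> P pP Pm; apply/negP => /andP[hp hq].
  have : (P %| gcdn m (gcdn `|p| `|q|))%N.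
    move: hp hq; rewrite !dvdzE !absz_nat => hp hq.
    by rewrite !dvdn_gcd Pm hp hq.
  have gpos : (0 < gcdn m (gcdn `|p| `|q|))%N by rewrite gcdn_gt0 m0.
  move/(dvdn_leq gpos) => hP.
  by have := leq_ltn_trans (leq_trans hP g1) (prime_gt1 pP); rewrite ltnn.
have finish : forall (N e : nat), m = (N * e)%N ->
    (forall j, (j < N)%N -> coprime (1 + j * e) m) ->
    ~~ ((N%:Z %| 2 * p)%Z && (N%:Z %| p - q)%Z) ->
    ~~ ((N%:Z %| 2 * p)%Z && (N%:Z %| p + q)%Z) ->
    ~~ ((N%:Z %| 2 * q)%Z && (N%:Z %| p - q)%Z) ->
    ~~ ((N%:Z %| 2 * q)%Z && (N%:Z %| p + q)%Z) ->
    [/\ a = 0, b = 0, c = 0 & d = 0].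
  move=> N e md hc n1 n2 n3 n4.
  have pw' := prim_sub pw md.
  have Hall : forall j, (j < N)%N -> j != 0%N -> Rf a b c d p q (w * (w ^+ e) ^+ j) = 0.
    by move=> j jN _; rewrite wshift; apply: G; apply: hc.
  have Hj0 : Rf a b c d p q (w * (w ^+ e) ^+ 0) = 0 by rewrite expr0 mulr1.
  exact: fin_all pw h1 h2 h3 h4 n1 n2 n3 n4 (split_all pw' w0 Hall Hj0).
case: (pickP (fun P : 'I_m.+1 => [&& prime P, (P %| m)%N, odd P & (4 < P)%N || (P * P %| m)%N]))
  => [[P Plt] /= /and4P[pP Pm oP hP] | noA]; first clear Plt.
  set e := (m %/ P)%N.
  have md : m = (P * e)%N by rewrite /e mulnC divnK.
  have pw' := prim_sub pw md.
  have [n1 n2 n3 n4] := NT_odd pP oP (npq P pP Pm).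
  case: (pickP (fun j : 'I_P => ~~ coprime (1 + j * e) m)) => [j0 hj0 | allc]; last first.
    apply: (finish P e md) => // j jP; apply/negPn/negP => bad.
    by move: (allc (Ordinal jP)) => /=; rewrite bad.
  have Hall : forall j, (j < P)%N -> j != (j0 : nat) ->
      Rf a b c d p q (w * (w ^+ e) ^+ j) = 0.
    move=> j jP nj; rewrite wshift; apply: G; apply/negPn/negP => bad.
    by move/negP: nj; apply; apply/eqP; apply: (bad_unique m0 pP md bad hj0 jP (ltn_ord j0)).
  have [_ nPe] := bad_P m0 pP md hj0.
  have P4 : (4 < P)%N.
    move: hP; case: (ltnP 4 P) => //= _ PP; case/negP: nPe.
    by move: PP; rewrite md dvdn_pmul2l // prime_gt0.
  have [t0 Ht0] := @empty_class P a b c d p q w pP P4 (npq P pP Pm).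
  have Hj0 := split_one pw' w0 (ltn_ord j0) Hall Ht0.
  exact: fin_all pw h1 h2 h3 h4 n1 n2 n3 n4 (split_all pw' w0 Hall Hj0).
have hodd : forall P, prime P -> (P %| m)%N -> odd P -> ~~ (4 < P)%N && ~~ (P * P %| m)%N.
  move=> P pP Pm oP; have Plt : (P < m.+1)%N by rewrite ltnS dvdn_leq.
  by have := noA (Ordinal Plt); rewrite /= pP Pm oP /= => /negbT; rewrite negb_or.
have B1 : (4 %| m)%N -> (2%:Z %| p)%Z != (2%:Z %| q)%Z -> [/\ a = 0, b = 0, c = 0 & d = 0].
  move=> m4 npar; have [k mk] := dvdnP m4.
  have md : m = (2 * (2 * k))%N by rewrite mk k4.
  have [n1 n2 n3 n4] := NT2 npar.
  apply: (finish 2%N (2 * k)%N md) => // j _.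
  apply: (coprime_shift j m0); apply: (primes_div md) => l pl l2.
  by move: l2; rewrite dvdn_prime2 // => /eqP ->; apply: dvdn_mulr.
have B2 : (8 %| m)%N -> ~~ (2%:Z %| p)%Z -> ~~ (2%:Z %| q)%Z -> [/\ a = 0, b = 0, c = 0 & d = 0].
  move=> m8 np nq; have [k mk] := dvdnP m8.
  have md : m = (4 * (2 * k))%N by rewrite mk k8.
  have [n1 n2 n3 n4] := NT4 np nq.
  apply: (finish 4%N (2 * k)%N md) => // j _.
  apply: (coprime_shift j m0); apply: (primes_div md) => l pl l4.
  have l2 : (l %| 2)%N by move: l4; rewrite (_ : 4 = 2 * 2)%N // Euclid_dvdM // orbb.
  by move: l2; rewrite dvdn_prime2 // => /eqP ->; apply: dvdn_mulr.
have B3 : ~~ (8 %| m)%N -> ((4 %| m)%N -> (2%:Z %| p)%Z = (2%:Z %| q)%Z) ->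
    [/\ a = 0, b = 0, c = 0 & d = 0].
  move=> h8 hpar; exfalso.
  have h12 := div12 m0 hodd h8.
  have hnp : (2 %| m)%N -> ~~ ((2%:Z %| p)%Z && (2%:Z %| q)%Z) by move=> m2; apply: npq.
  exact: (small_m m0 h12 hpar hnp h1 h2 h3 h4).
case m4 : (4 %| m)%N; last first.
  apply: B3; last by rewrite m4.
  apply/negP => m8.
  have : (4 %| m)%N by apply: dvdn_trans m8; rewrite (_ : 8 = 4 * 2)%N // dvdn_mulr.
  by rewrite m4.
case: (boolP ((2%:Z %| p)%Z != (2%:Z %| q)%Z)) => [np|]; first exact: B1.
rewrite negbK => /eqP same.
case m8 : (8 %| m)%N; last by apply: B3; rewrite ?m8 // => _; apply/eqP.
case tp : (2%:Z %| p)%Z.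
  exfalso; have m2 : (2 %| m)%N by apply: dvdn_trans m4.
  by move/negP: (npq 2%N isT m2); apply; rewrite tp -same tp.
by apply: B2 => //; rewrite ?tp // -same tp.
Qed.

Definition Fpoly (m : nat) (a b c d : rat) (p q : int) : {poly rat} :=
  a *: 'X^(`|(p %% m%:Z)%Z|) + b *: 'X^(`|(- p %% m%:Z)%Z|) +
  c *: 'X^(`|(q %% m%:Z)%Z|) + d *: 'X^(`|(- q %% m%:Z)%Z|).

Lemma Fpoly_eval (F : numFieldType) (m : nat) (u : F) a b c d p q :
  (0 < m)%N -> u ^+ m = 1 ->
  (map_poly ratr (Fpoly m a b c d p q)).[u] = Rf a b c d p q u.
Proof.
move=> m0 um.
rewrite /Fpoly !rmorphD /= !map_polyZ !map_polyXn !hornerE.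
by rewrite /Rf !(@exprz_mod _ u m _ m0 um).
Qed.

Lemma root_Phi (F : numFieldType) (m : nat) (z : F) :
  m.-primitive_root z -> root (map_poly intr 'Phi_m) z.
Proof.
move=> pz; have m0 := prim_order_gt0 pz.
have key : forall n, (0 < n)%N -> \prod_(e <- divisors n) (map_poly intr 'Phi_e).[z] = z ^+ n - 1 :> F.
  move=> n n0; rewrite -horner_prod -rmorph_prod prod_Cyclotomic //.
  by rewrite rmorphB /= map_polyXn rmorph1 !hornerE.
have := key m m0; rewrite (prim_expr_order pz) subrr => /eqP.
rewrite prodf_seq_eq0 => /hasP[e]; rewrite -dvdn_divisors // => em /= /eqP re.
case: (eqVneq e m) => [<-|nem]; first by rewrite /root re.
exfalso.
have e0 : (0 < e)%N by apply: dvdn_gt0 m0 em.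
have : z ^+ e - 1 = 0.
  rewrite -key // (big_rem e) /=; last by rewrite -dvdn_divisors.
  by rewrite re mul0r.
move/eqP; rewrite subr_eq0 -(prim_order_dvd pz) => me.
by move/negP: nem; apply; rewrite eqn_dvd em me.
Qed.

Lemma transfer (F : numFieldType) (m : nat) (z : F) a b c d p q :
  m.-primitive_root z -> Rf a b c d p q z = 0 ->
  exists w : algC, m.-primitive_root w /\ Rf a b c d p q w = 0.
Proof.
move=> pz H; have m0 := prim_order_gt0 pz.
set F0 := Fpoly m a b c d p q.
pose Psi : {poly rat} := map_poly intr 'Phi_m.
have mapPsi : forall K : numFieldType, map_poly (@ratr K) Psi = map_poly intr 'Phi_m.
  move=> K; rewrite /Psi -map_poly_comp; apply: eq_map_poly => x /=; exact: ratr_int.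
set G0 := gcdp F0 Psi.
have rz : root (map_poly (@ratr F) G0) z.
  rewrite gcdp_map root_gcd mapPsi root_Phi // andbT /root Fpoly_eval ?H ?(prim_expr_order pz) //.
have sG : size G0 != 1%N.
  apply/negP => /size_poly1P [c0 c00 eG]; move: rz; rewrite eG map_polyC /root hornerC fmorph_eq0.
  by rewrite (negbTE c00).
have : size (map_poly (@ratr algC) G0) != 1%N by rewrite size_map_poly.
case/closed_rootP => w.
rewrite gcdp_map root_gcd mapPsi => /andP[rF rP].
have [z0 pz0] := C_prim_root_exists m0.
have pw : m.-primitive_root w.
  by move: rP; rewrite (Cintr_Cyclotomic pz0) root_cyclotomic.
exists w; split => //.
by move: rF; rewrite /root Fpoly_eval ?(prim_expr_order pw) // => /eqP.
Qed.

Section Cx.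
Local Open Scope complex_scope.

Lemma mulcE' (R : rcfType) (a b c d : R) :
  (a +i* b) * (c +i* d) = (a * c - b * d) +i* (a * d + b * c).
Proof. by []. Qed.

Lemma demoivre (R : realType) (t : R) (n : nat) :
  (cos t +i* sin t) ^+ n = cos (t *+ n) +i* sin (t *+ n).
Proof.
elim: n => [|n IH]; first by rewrite expr0 mulr0n cos0 sin0.
rewrite exprS IH mulcE' mulrS cosD sinD.
congr (_ +i* _); ring.
Qed.

Lemma cos_lt1 (R : realType) (x : R) : 0 < x < pi *+ 2 -> cos x < 1.
Proof.
move=> /andP[x0 x2].
have pi0 : 0 < pi :> R := pi_gt0 R.
case: (lerP x pi) => hx.
  rewrite -[X in _ < X]cos0 ltr_cos // ?in_itv /= ?lexx ?(ltW x0) ?hx ?(ltW pi0) //.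
have -> : cos x = cos (pi *+ 2 - x).
  by rewrite cosB cos2pi sin2pi mul0r addr0 mul1r.
rewrite mulr2n in x2 *.
rewrite -[X in _ < X]cos0 ltr_cos ?in_itv /=; try lra.
all: apply/andP; split; lra.
Qed.

Lemma zeta_prim (R : realType) (m : nat) : (0 < m)%N -> m.-primitive_root (zeta R m).
Proof.
move=> m0.
have mR : (m%:R : R) != 0 by rewrite pnatr_eq0 -lt0n.
have mRp : (0 : R) < m%:R by rewrite ltr0n.
have pi0 : 0 < pi :> R := pi_gt0 R.
have th : forall k : nat, (2 * pi / m%:R) *+ k = (2 * pi) * (k%:R / m%:R) :> R.
  by move=> k; rewrite -mulr_natr mulrAC mulrA.
have z1 : zeta R m ^+ m = 1.
  rewrite /zeta demoivre th divff // mulr1.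
  have -> : 2 * pi = pi *+ 2 :> R by rewrite mulr_natl.
  by rewrite cos2pi sin2pi.
have [k pk km] := prim_order_exists m0 z1.
have k0 := prim_order_gt0 pk.
case: (ltnP k m) => [km'|mk]; last first.
  have e : k = m by apply/eqP; rewrite eqn_leq mk dvdn_leq.
  by rewrite e in pk.
have := prim_expr_order pk; rewrite /zeta demoivre th => /(congr1 (@complex.Re R)) /=.
move=> c1; have : cos (2 * pi * (k%:R / m%:R)) < 1 :> R.
  apply: cos_lt1; apply/andP; split.
    apply: mulr_gt0; first by apply: mulr_gt0 => //; lra.
    by apply: divr_gt0; rewrite ltr0n.
  have -> : pi *+ 2 = 2 * pi * 1 :> R by rewrite mulr1 mulr_natl.
  rewrite ltr_pM2l; last by apply: mulr_gt0 => //; lra.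
  by rewrite ltr_pdivrMr // mul1r ltr_nat.
by rewrite c1 ltxx.
Qed.

End Cx.

Theorem lemma9p8 (R : realType) (m : nat) (p q : int) :
  (0 < m)%N -> p != q ->
  ~~ (m%:Z %| 4 * p)%Z -> ~~ (m%:Z %| 4 * q)%Z ->
  ~~ (m%:Z %| 2 * (p + q))%Z -> ~~ (m%:Z %| 2 * (p - q))%Z ->
  Qlin_indep4 (zeta R m ^ p) (zeta R m ^ (- p)) (zeta R m ^ q) (zeta R m ^ (- q)).
Proof.
move=> m0 _ h1 h2 h3 h4 a b c d H.
have pz := @zeta_prim R m m0.
have H' : Rf a b c d p q (zeta R m) = 0 by exact: H.
have [w [pw Hw]] := @transfer _ m _ a b c d p q pz H'.
exact: (@core m w a b c d p q pw h1 h2 h3 h4 Hw).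
Qed.
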